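(* Let $b=3$, $c>0$ and $k\in\left(0,\frac{c}{4}\right)$. Let $\phi=\phi_k\in C^\infty(\mathbb{R})$ be the solitary wave profile of $$u_t-u_{txx}+4uu_x=3u_xu_{xx}+uu_{xxx},$$ that is, the travelling wave $u(t,x)=\phi(x-ct)$ with $\phi'(0)=0$, $\phi(x)\to k$ as $|x|\to\infty$ and $0<\phi<c$. Then the mapping $$k\mapsto Q(\phi)=\int_{\mathbb{R}}\left[3\frac{c-k}{c-\phi}-\left(\frac{c-k}{c-\phi}\right)^3-2\right]dx$$ is strictly increasing on $\left(0,\frac{c}{4}\right)$. *)

(* Defs.v *)
From Stdlib Require Import Reals.
From Coquelicot Require Import Coquelicot.
Open Scope R_scope.

Definition smooth (f : R -> R) : Prop := forall (n : nat) (x : R), ex_derive_n f n x.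

(* Travelling-wave equation obtained by substituting u(t,x) = phi(x - c t) into
   u_t - u_txx + 4 u u_x = 3 u_x u_xx + u u_xxx   (b = 3, Degasperis-Procesi). *)
Definition DP_tw_ode (c : R) (phi : R -> R) : Prop :=
  forall x : R,
    - c * Derive_n phi 1 x + c * Derive_n phi 3 x + 4 * phi x * Derive_n phi 1 x
    = 3 * Derive_n phi 1 x * Derive_n phi 2 x + phi x * Derive_n phi 3 x.

Definition DP_solitary_profile (c k : R) (phi : R -> R) : Prop :=
  smooth phi /\
  DP_tw_ode c phi /\
  Derive_n phi 1 0 = 0 /\
  is_lim phi p_infty k /\
  is_lim phi m_infty k /\
  (forall x : R, 0 < phi x < c) /\
  (exists x : R, phi x <> k).

Definition Q_density (c k : R) (phi : R -> R) (x : R) : R :=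
  3 * ((c - k) / (c - phi x)) - ((c - k) / (c - phi x)) ^ 3 - 2.

Definition Q_int (c k : R) (phi : R -> R) : Prop :=
  ex_RInt_gen (Q_density c k phi) (Rbar_locally m_infty) (Rbar_locally p_infty).

Definition Q (c k : R) (phi : R -> R) : R :=
  RInt_gen (Q_density c k phi) (Rbar_locally m_infty) (Rbar_locally p_infty).

(* Main.v *)
Require Import Defs.
From Stdlib Require Import Reals Lra Psatz.
From Coquelicot Require Import Coquelicot.
Open Scope R_scope.

Definition lim_p (f : R -> R) (l : R) :=
  forall eps, 0 < eps -> exists M, forall x, M < x -> Rabs (f x - l) < eps.
Definition lim_m (f : R -> R) (l : R) :=
  forall eps, 0 < eps -> exists M, forall x, x < M -> Rabs (f x - l) < eps.

Lemma is_lim_to_p f (l : R) : is_lim f p_infty l -> lim_p f l.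
Proof.
  intros H eps Heps.
  apply (H (fun y => Rabs (y - l) < eps)).
  simpl. exists (mkposreal eps Heps). intros y Hy. exact Hy.
Qed.

Lemma is_lim_to_m f (l : R) : is_lim f m_infty l -> lim_m f l.
Proof.
  intros H eps Heps.
  apply (H (fun y => Rabs (y - l) < eps)).
  simpl. exists (mkposreal eps Heps). intros y Hy. exact Hy.
Qed.

Lemma p_to_filterlim f l : lim_p f l -> filterlim f (Rbar_locally p_infty) (locally l).
Proof.
  intros H P [eps HP].
  destruct (H eps (cond_pos eps)) as [M HM].
  exists M. intros x Hx. apply HP. apply HM. exact Hx.
Qed.

Lemma m_to_filterlim f l : lim_m f l -> filterlim f (Rbar_locally m_infty) (locally l).
Proof.
  intros H P [eps HP].
  destruct (H eps (cond_pos eps)) as [M HM].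
  exists M. intros x Hx. apply HP. apply HM. exact Hx.
Qed.

Lemma cont_eps g k : continuous g k ->
  forall eps, 0 < eps -> exists d, 0 < d /\ forall u, Rabs (u - k) < d -> Rabs (g u - g k) < eps.
Proof.
  intros H eps Heps.
  destruct (H (fun y => Rabs (y - g k) < eps)) as [d Hd].
  simpl. exists (mkposreal eps Heps). intros y Hy. exact Hy.
  exists d. split. apply cond_pos. intros u Hu. apply Hd. exact Hu.
Qed.

Lemma lim_p_comp f g k : lim_p f k -> continuous g k -> lim_p (fun x => g (f x)) (g k).
Proof.
  intros Hf Hg eps Heps.
  destruct (cont_eps g k Hg eps Heps) as [d [Hd Hd']].
  destruct (Hf d Hd) as [M HM]. exists M. intros x Hx. apply Hd'. apply HM. exact Hx.
Qed.

Lemma lim_m_comp f g k : lim_m f k -> continuous g k -> lim_m (fun x => g (f x)) (g k).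
Proof.
  intros Hf Hg eps Heps.
  destruct (cont_eps g k Hg eps Heps) as [d [Hd Hd']].
  destruct (Hf d Hd) as [M HM]. exists M. intros x Hx. apply Hd'. apply HM. exact Hx.
Qed.

Lemma lim_p_ext f g l : (exists M, forall x, M < x -> f x = g x) -> lim_p f l -> lim_p g l.
Proof.
  intros [M0 H0] H eps Heps. destruct (H eps Heps) as [M HM].
  exists (Rmax M M0). intros x Hx. rewrite <- H0. apply HM.
  eapply Rle_lt_trans; [apply Rmax_l| exact Hx].
  eapply Rle_lt_trans; [apply Rmax_r| exact Hx].
Qed.

Lemma lim_m_ext f g l : (exists M, forall x, x < M -> f x = g x) -> lim_m f l -> lim_m g l.
Proof.
  intros [M0 H0] H eps Heps. destruct (H eps Heps) as [M HM].
  exists (Rmin M M0). intros x Hx. rewrite <- H0. apply HM.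
  eapply Rlt_le_trans; [exact Hx| apply Rmin_l].
  eapply Rlt_le_trans; [exact Hx| apply Rmin_r].
Qed.

Lemma deriv_cont_pt (f : R -> R) (x l : R) : is_derive f x l -> continuity_pt f x.
Proof.
  intros H. apply continuity_pt_filterlim.
  apply (ex_derive_continuous (K := R_AbsRing) (V := R_NormedModule)).
  exists l. exact H.
Qed.

Lemma mvt f df a b : a < b -> (forall x, is_derive f x (df x)) ->
  exists c, a <= c <= b /\ f b - f a = df c * (b - a).
Proof.
  intros Hab H.
  destruct (MVT_gen f a b df) as [c [Hc E]].
  - intros x _. apply H.
  - intros x _. apply (deriv_cont_pt f x (df x)), H.
  - exists c. rewrite Rmin_left, Rmax_right in Hc by lra. split; auto.
Qed.

Lemma const_deriv0 g : (forall x, is_derive g x 0) -> forall x, g x = g 0.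
Proof.
  intros H x.
  destruct (Rtotal_order x 0) as [Hx|[Hx|Hx]].
  - destruct (mvt g (fun _ => 0) x 0 Hx H) as [c [_ E]]. lra.
  - subst; reflexivity.
  - destruct (mvt g (fun _ => 0) 0 x Hx H) as [c [_ E]]. lra.
Qed.

Lemma decr_of_deriv h dh : (forall x, is_derive h x (dh x)) -> (forall x, dh x <= 0) ->
  forall x y, x <= y -> h y <= h x.
Proof.
  intros H Hn x y Hxy. destruct (Rle_lt_or_eq_dec _ _ Hxy) as [Hl|He].
  - destruct (mvt h dh x y Hl H) as [c [_ E]].
    assert (dh c * (y - x) <= 0). { apply Rmult_le_0_r; [apply Hn| lra]. } lra.
  - subst; lra.
Qed.

Lemma sincr_of_deriv h dh a b : a < b -> (forall x, is_derive h x (dh x)) ->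
  (forall x, a <= x <= b -> 0 < dh x) -> h a < h b.
Proof.
  intros Hab H Hp.
  destruct (mvt h dh a b Hab H) as [c [Hc E]].
  assert (0 < dh c * (b - a)). { apply Rmult_lt_0_compat; [apply Hp; lra| lra]. } lra.
Qed.

Lemma no_escape_p g dg l : lim_p g l -> (forall x, is_derive g x (dg x)) ->
  forall d, 0 < d -> forall M, exists x, M < x /\ Rabs (dg x) < d.
Proof.
  intros Hl Hd d Hdp M.
  destruct (Hl (d/2)) as [M' HM']. lra.
  set (x0 := Rmax M M' + 1).
  assert (Hx0 : M < x0 /\ M' < x0).
  { unfold x0; split; [pose proof (Rmax_l M M')| pose proof (Rmax_r M M')]; lra. }
  destruct (mvt g dg x0 (x0 + 1)) as [c [Hc E]]; [lra| exact Hd|].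
  exists c. split; [lra|].
  replace (dg c) with (g (x0 + 1) - g x0) by (rewrite E; ring).
  pose proof (HM' x0 ltac:(lra)). pose proof (HM' (x0+1) ltac:(lra)).
  apply Rabs_def1; apply Rabs_def2 in H; apply Rabs_def2 in H0; lra.
Qed.

Lemma no_escape_m g dg l : lim_m g l -> (forall x, is_derive g x (dg x)) ->
  forall d, 0 < d -> forall M, exists x, x < M /\ Rabs (dg x) < d.
Proof.
  intros Hl Hd d Hdp M.
  destruct (Hl (d/2)) as [M' HM']. lra.
  set (x0 := Rmin M M' - 2).
  assert (Hx0 : x0 + 1 < M /\ x0 + 1 < M').
  { unfold x0; split; [pose proof (Rmin_l M M')| pose proof (Rmin_r M M')]; lra. }
  destruct (mvt g dg x0 (x0 + 1)) as [c [Hc E]]; [lra| exact Hd|].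
  exists c. split; [lra|].
  replace (dg c) with (g (x0 + 1) - g x0) by (rewrite E; ring).
  pose proof (HM' x0 ltac:(lra)). pose proof (HM' (x0+1) ltac:(lra)).
  apply Rabs_def1; apply Rabs_def2 in H; apply Rabs_def2 in H0; lra.
Qed.

Lemma ex_of_is (f : R -> R) x l : is_derive f x l -> ex_derive f x.
Proof. intros H; exists l; exact H. Qed.

Lemma Derive_eq (f : R -> R) (x l : R) : is_derive f x l -> Derive (fun y : R => f y) x = l.
Proof. intro H. apply is_derive_unique. exact H. Qed.

Definition Hp (c A v : R) := 2*A*c*v + (c^2-A)*v^2 - 2*c*v^3 + v^4.

Lemma integrals (c k : R) (u u1 u2 u3 : R -> R) :
  0 < c -> 0 < k -> k < c ->
  (forall x, is_derive u x (u1 x)) ->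
  (forall x, is_derive u1 x (u2 x)) ->
  (forall x, is_derive u2 x (u3 x)) ->
  (forall x, -c*u1 x + c*u3 x + 4*u x*u1 x = 3*u1 x*u2 x + u x*u3 x) ->
  lim_p u k -> (forall x, u x < c) ->
  forall x, (c - u x)*u2 x = u1 x^2 + (u x - k)*(c - 2*u x - 2*k) /\
    (c-u x)^2*u1 x^2 = (u x - k)^2*((c-u x)^2 - 2*k*(c-u x) - k*(c-k)).
Proof.
  intros Hc Hk Hkc D1 D2 D3 ODE Hlim Hlt.
  set (E1 := fun x => (c - u x)*u2 x - u1 x^2 - c*u x + 2*u x^2).
  assert (dE1 : forall x, is_derive E1 x 0).
  { intro x. unfold E1. auto_derive.
    - repeat split; eapply ex_of_is; eauto.
      rewrite (Derive_eq u x _ (D1 x)).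
      rewrite (Derive_eq u1 x _ (D2 x)).
      rewrite (Derive_eq u2 x _ (D3 x)).
      pose proof (ODE x). nra. }
  set (A := E1 0).
  assert (HA : forall x, E1 x = A) by (intro; apply const_deriv0; exact dE1).
  set (E2 := fun x => (c-u x)^2*u1 x^2 - Hp c A (u x)).
  assert (dE2 : forall x, is_derive E2 x 0).
  { intro x. unfold E2, Hp. auto_derive.
    - repeat split; eapply ex_of_is; eauto.
    - rewrite (Derive_eq u x _ (D1 x)).
      rewrite (Derive_eq u1 x _ (D2 x)).
      pose proof (HA x) as H. unfold E1 in H.
      transitivity (2*(c-u x)*u1 x*((c - u x)*u2 x - u1 x^2 - c*u x + 2*u x^2 - A)).
      + ring.
      + rewrite H. ring. }
  set (B := E2 0).
  assert (HB : forall x, E2 x = B) by (intro; apply const_deriv0; exact dE2).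
  set (G1 := fun v => (B + Hp c A v)/(c-v)^2).
  assert (R1 : forall x, u1 x ^2 = G1 (u x)).
  { intro x. unfold G1. pose proof (HB x) as H. unfold E2 in H.
    pose proof (Hlt x). field_simplify_eq; [|lra]. lra. }
  assert (cG1 : continuous G1 k).
  { apply (ex_derive_continuous (K := R_AbsRing) (V := R_NormedModule)).
    unfold G1, Hp. auto_derive. intro HH; nra. }
  assert (L1 : lim_p (fun x => u1 x ^2) (G1 k)).
  { eapply lim_p_ext; [exists 0; intros x _; symmetry; apply R1|].
    apply lim_p_comp; assumption. }
  assert (G1k : G1 k = 0).
  { destruct (Rtotal_order (G1 k) 0) as [Hn|[He|Hp0]]; [exfalso| exact He| exfalso].
    - destruct (L1 (- G1 k)) as [M HM]; [lra|].
      pose proof (HM (M+1) ltac:(lra)) as H. apply Rabs_def2 in H.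
      pose proof (pow2_ge_0 (u1 (M+1))). lra.
    - destruct (L1 (G1 k / 2)) as [M HM]; [lra|].
      set (d := Rmin 1 (G1 k / 2)).
      assert (Hd : 0 < d /\ d <= 1 /\ d <= G1 k / 2).
      { unfold d. split; [apply Rmin_glb_lt; lra| split; [apply Rmin_l| apply Rmin_r]]. }
      destruct (no_escape_p u u1 k Hlim D1 d ltac:(lra) M) as [x [Hx Hux]].
      pose proof (HM x Hx) as H. apply Rabs_def2 in H. apply Rabs_def2 in Hux.
      assert (u1 x ^ 2 < d) by nra. lra. }
  assert (L1' : lim_p u1 0).
  { intros eps Heps. destruct (L1 (eps*eps)) as [M HM]; [nra|].
    exists M. intros x Hx. pose proof (HM x Hx) as H. rewrite G1k in H.
    apply Rabs_def2 in H. apply Rabs_def1; nra. }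
  set (G2 := fun v => (A + G1 v + c*v - 2*v^2)/(c-v)).
  assert (R2 : forall x, u2 x = G2 (u x)).
  { intro x. unfold G2. rewrite <- R1. pose proof (HA x) as H. unfold E1 in H.
    pose proof (Hlt x). field_simplify_eq; [|lra]. lra. }
  assert (cG2 : continuous G2 k).
  { apply (ex_derive_continuous (K := R_AbsRing) (V := R_NormedModule)).
    unfold G2, G1, Hp. auto_derive. repeat split; intro HH; nra. }
  assert (L2 : lim_p u2 (G2 k)).
  { eapply lim_p_ext; [exists 0; intros x _; symmetry; apply R2|].
    apply lim_p_comp; assumption. }
  assert (G2k : G2 k = 0).
  { destruct (Req_dec (G2 k) 0) as [He|Hne]; [exact He| exfalso].
    pose proof (Rabs_pos_lt _ Hne) as Hpos.
    destruct (L2 (Rabs (G2 k) / 2)) as [M HM]; [lra|].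
    destruct (no_escape_p u1 u2 0 L1' D2 (Rabs (G2 k)/2) ltac:(lra) M) as [x [Hx Hux]].
    pose proof (HM x Hx) as H.
    pose proof (Rabs_triang_inv (G2 k) (u2 x)).
    replace (G2 k - u2 x) with (-(u2 x - G2 k)) in H0 by ring.
    rewrite Rabs_Ropp in H0. lra. }
  assert (EA : A = 2*k^2 - c*k).
  { unfold G2 in G2k. rewrite G1k in G2k.
    assert (c - k <> 0) by lra.
    apply (Rmult_eq_compat_r (c-k)) in G2k. field_simplify in G2k; [|lra]. lra. }
  assert (EB : B = - Hp c A k).
  { unfold G1 in G1k.
    assert ((c - k)^2 <> 0) by (apply pow_nonzero; lra).
    apply (Rmult_eq_compat_r ((c-k)^2)) in G1k. field_simplify in G1k; [|lra]. lra. }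
  intro x. split.
  - pose proof (HA x) as H. unfold E1 in H. rewrite EA in H. nra.
  - pose proof (HB x) as H. unfold E2 in H. rewrite EB in H. unfold Hp in H.
    rewrite EA in H. nra.
Qed.

Definition qq (c k y : R) := (y)^2 - 2*k*y - k*(c-k).

Lemma sq_pos (t : R) : t <> 0 -> 0 < t^2.
Proof. intro H. pose proof (Rsqr_pos_lt t H). unfold Rsqr in *. nra. Qed.

Lemma Rabs_le_inv' (t m : R) : Rabs t <= m -> -m <= t <= m.
Proof. intro H. pose proof (Rabs_maj2 t). pose proof (Rle_abs t). lra. Qed.

Lemma y_gt_k c k (u u1 : R -> R) x :
  0 < c -> 0 < k -> k < c/4 -> 0 < u x < c ->
  (c-u x)^2*u1 x^2 = (u x - k)^2*qq c k (c - u x) -> u x <> k ->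
  0 < c - u x - k /\ 0 <= qq c k (c - u x).
Proof.
  unfold qq. intros Hc Hk Hk4 [H0 H1] E Hne.
  assert (Hq : 0 <= (c - u x) ^ 2 - 2 * k * (c - u x) - k * (c - k)).
  { assert (0 < (u x - k)^2) by (apply sq_pos; lra).
    assert (0 <= (c - u x)^2 * u1 x^2) by (apply Rmult_le_pos; apply pow2_ge_0).
    destruct (Rle_or_lt 0 ((c - u x) ^ 2 - 2 * k * (c - u x) - k * (c - k))) as [h|h]; [exact h|].
    pose proof (Rmult_lt_compat_l _ _ _ H h). lra. }
  split; [|exact Hq]. nra.
Qed.

Lemma deriv_bound c k (u u1 : R -> R) x :
  0 < c -> 0 < k -> k < c/4 -> 0 < u x < c ->
  (c-u x)^2*u1 x^2 = (u x - k)^2*qq c k (c - u x) ->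
  u1 x ^2 <= (c^2/k^2) * (u x - k)^2.
Proof.
  intros Hc Hk Hk4 Hu E.
  destruct (Req_dec (u x) k) as [He|Hne].
  - rewrite He in E |- *. replace ((k-k)^2) with 0 in * by ring.
    assert (u1 x ^2 = 0).
    { assert (0 < (c - u x)^2) by (apply sq_pos; lra).
      assert (0 <= u1 x ^2) by apply pow2_ge_0.
      rewrite <- He in E. nra. }
    rewrite H. nra.
  - destruct (y_gt_k c k u u1 x Hc Hk Hk4 Hu E Hne) as [Hy Hq].
    unfold qq in *.
    set (y := c - u x) in *. set (D := u x - k) in *.
    assert (Hy2 : 0 < y < c) by (unfold y; lra).
    assert (Q1 : y^2 - 2*k*y - k*(c-k) <= c^2) by nra.
    assert (Q2 : k^2 <= y^2) by nra.
    assert (y^2 * u1 x^2 <= D^2 * c^2).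
    { rewrite E. apply Rmult_le_compat_l; [apply pow2_ge_0| exact Q1]. }
    assert (k^2 * u1 x ^2 <= D^2 * c^2).
    { eapply Rle_trans; [|exact H]. apply Rmult_le_compat_r; [apply pow2_ge_0| exact Q2]. }
    assert (0 < k^2) by nra.
    apply (Rmult_le_reg_l (k^2)); [exact H1|].
    replace (k ^ 2 * (c ^ 2 / k ^ 2 * D ^ 2)) with (D^2*c^2) by (field; lra). exact H0.
Qed.

Lemma never_k c k (u u1 : R -> R) :
  0 < c -> 0 < k -> k < c/4 ->
  (forall x, is_derive u x (u1 x)) -> (forall x, 0 < u x < c) ->
  (forall x, (c-u x)^2*u1 x^2 = (u x - k)^2*qq c k (c - u x)) ->
  (exists x, u x <> k) -> forall x, u x <> k.
Proof.
  intros Hc Hk Hk4 D1 Hu E [x1 Hx1] x0 Hx0.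
  apply Hx1.
  set (K := 1 + c^2/k^2).
  assert (HK : 0 < K).
  { unfold K. assert (0 <= c^2/k^2).
    { apply Rle_mult_inv_pos; [apply pow2_ge_0| apply pow_lt; lra]. } lra. }
  assert (Bd : forall x, Rabs (2*(u x - k)*u1 x) <= K * (u x - k)^2).
  { intro x. pose proof (deriv_bound c k u u1 x Hc Hk Hk4 (Hu x) (E x)).
    pose proof (pow2_ge_0 (u x - k - u1 x)). pose proof (pow2_ge_0 (u x - k + u1 x)).
    unfold K. apply Rabs_le. split; nra. }
  set (h := fun x => (u x - k)^2 * exp (-(K*x))).
  set (h2 := fun x => - ((u x - k)^2 * exp (K*x))).
  assert (Dh : forall x, is_derive h x (exp (-(K*x)) * (2*(u x - k)*u1 x - K*(u x - k)^2))).
  { intro x. unfold h. auto_derive; [eapply ex_of_is; eauto|].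
    rewrite (Derive_eq u x _ (D1 x)). ring. }
  assert (Dh2 : forall x, is_derive h2 x (- (exp (K*x) * (2*(u x - k)*u1 x + K*(u x - k)^2)))).
  { intro x. unfold h2. auto_derive; [eapply ex_of_is; eauto|].
    rewrite (Derive_eq u x _ (D1 x)). ring. }
  assert (Hh : forall x y, x <= y -> h y <= h x).
  { apply (decr_of_deriv h _ Dh). intro x. pose proof (Bd x) as B. apply Rabs_le_inv' in B.
    pose proof (exp_pos (-(K*x))). assert (0 <= exp (-(K*x)) * (K * (u x - k) ^ 2 - 2 * (u x - k) * u1 x)) by (apply Rmult_le_pos; lra). lra. }
  assert (Hh2 : forall x y, x <= y -> h2 y <= h2 x).
  { apply (decr_of_deriv h2 _ Dh2). intro x. pose proof (Bd x) as B. apply Rabs_le_inv' in B.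
    pose proof (exp_pos (K*x)).
    assert (0 <= exp (K*x) * (2 * (u x - k) * u1 x + K * (u x - k) ^ 2)) by (apply Rmult_le_pos; lra). lra. }
  assert (Z : (u x1 - k)^2 = 0).
  { destruct (Rle_or_lt x0 x1) as [Hle|Hlt].
    - pose proof (Hh x0 x1 Hle). unfold h in H. rewrite Hx0 in H.
      replace ((k - k)^2) with 0 in H by ring. rewrite Rmult_0_l in H.
      pose proof (exp_pos (-(K*x1))). pose proof (pow2_ge_0 (u x1 - k)). nra.
    - pose proof (Hh2 x1 x0 (Rlt_le _ _ Hlt)). unfold h2 in H. rewrite Hx0 in H.
      replace ((k - k)^2) with 0 in H by ring. rewrite Rmult_0_l in H.
      pose proof (exp_pos (K*x1)). pose proof (pow2_ge_0 (u x1 - k)). nra. }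
  assert (u x1 - k = 0) by nra. lra.
Qed.

Lemma above_k c k (u u1 : R -> R) :
  0 < c -> 0 < k -> k < c/4 ->
  (forall x, is_derive u x (u1 x)) -> (forall x, 0 < u x < c) ->
  (forall x, (c-u x)^2*u1 x^2 = (u x - k)^2*qq c k (c - u x)) ->
  u1 0 = 0 -> (forall x, u x <> k) -> forall x, k < u x.
Proof.
  intros Hc Hk Hk4 D1 Hu E H0 Hne.
  assert (P0 : k < u 0).
  { destruct (y_gt_k c k u u1 0 Hc Hk Hk4 (Hu 0) (E 0) (Hne 0)) as [Hy _].
    pose proof (E 0) as E0. rewrite H0 in E0.
    assert (0 < (u 0 - k)^2) by (apply sq_pos; intro HH; apply (Hne 0); lra).
    unfold qq in E0.
    assert (Hq : (c - u 0) ^ 2 - 2 * k * (c - u 0) - k * (c - k) = 0) by nra.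
    nra. }
  intro x. destruct (Rle_or_lt (u x) k) as [Hle|Hlt]; [|exact Hlt].
  exfalso.
  assert (Cu : continuity u) by (intro z; apply (deriv_cont_pt u z (u1 z)), D1).
  destruct (IVT_gen u 0 x k Cu) as [z [_ Hz]].
  { split; [apply Rle_trans with (u x); [apply Rmin_r| exact Hle]
           | apply Rle_trans with (u 0); [lra| apply Rmax_l]]. }
  exact (Hne z Hz).
Qed.

Definition Vf (c k : R) (u u1 : R -> R) (x : R) := -(c - u x) * u1 x / (u x - k).
Definition Wn (c k : R) (u u1 : R -> R) (x : R) :=
  2 * ln (c - u x - k + Vf c k u u1 x) - (c-k)/k * Vf c k u u1 x / (c - u x).

Lemma V_sq c k (u u1 : R -> R) x :
  0 < c -> 0 < k -> k < c/4 -> 0 < u x < c -> k < u x ->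
  (c-u x)^2*u1 x^2 = (u x - k)^2*qq c k (c - u x) ->
  (Vf c k u u1 x)^2 = qq c k (c - u x).
Proof.
  intros Hc Hk Hk4 Hu Hku E. unfold Vf.
  assert (0 < (u x - k)^2) by (apply pow_lt; lra).
  apply (Rmult_eq_reg_l ((u x - k)^2)); [|lra].
  rewrite <- E. field. lra.
Qed.

Lemma log_arg_pos c k (u u1 : R -> R) x :
  0 < c -> 0 < k -> k < c/4 -> 0 < u x < c -> k < u x ->
  (c-u x)^2*u1 x^2 = (u x - k)^2*qq c k (c - u x) ->
  0 < c - u x - k + Vf c k u u1 x /\ 0 < c - u x - k - Vf c k u u1 x.
Proof.
  intros Hc Hk Hk4 Hu Hku E.
  pose proof (V_sq c k u u1 x Hc Hk Hk4 Hu Hku E) as HV.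
  destruct (y_gt_k c k u u1 x Hc Hk Hk4 Hu E ltac:(lra)) as [Hy _].
  unfold qq in HV. set (V := Vf c k u u1 x) in *.
  assert (P : (c - u x - k + V) * (c - u x - k - V) = k * c) by nra.
  assert (0 < k * c) by nra.
  split; nra.
Qed.

Lemma V_deriv c k (u u1 u2 : R -> R) x :
  0 < c -> 0 < k -> k < c/4 ->
  (forall x, is_derive u x (u1 x)) -> (forall x, is_derive u1 x (u2 x)) ->
  0 < u x < c -> k < u x ->
  (c - u x)*u2 x = u1 x^2 + (u x - k)*(c - 2*u x - 2*k) ->
  (c-u x)^2*u1 x^2 = (u x - k)^2*qq c k (c - u x) ->
  is_derive (Vf c k u u1) x ((c - u x - k) * (c - k - (c - u x)) / (c - u x)).
Proof.
  intros Hc Hk Hk4 D1 D2 Hu Hku E1 E2.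
  unfold Vf. auto_derive.
  - repeat split; try (eapply ex_of_is; eauto). lra.
  - rewrite (Derive_eq u x _ (D1 x)), (Derive_eq u1 x _ (D2 x)).
    assert (Hu2 : u2 x = (u1 x^2 + (u x - k)*(c - 2*u x - 2*k)) / (c - u x)) by (field_simplify_eq; lra).
    rewrite Hu2.
    assert (Hu1 : u1 x ^2 = (u x - k)^2*qq c k (c - u x) / (c - u x)^2) by (field_simplify_eq; lra).
    unfold qq in Hu1.
    transitivity (-(c - 2*u x - 2*k) + (c - u x) * (u1 x ^2) / (u x - k)^2).
    + field. lra.
    + rewrite Hu1. field. lra.
Qed.

Lemma W_deriv c k (u u1 u2 : R -> R) x :
  0 < c -> 0 < k -> k < c/4 ->
  (forall x, is_derive u x (u1 x)) -> (forall x, is_derive u1 x (u2 x)) ->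
  0 < u x < c -> k < u x ->
  (c - u x)*u2 x = u1 x^2 + (u x - k)*(c - 2*u x - 2*k) ->
  (c-u x)^2*u1 x^2 = (u x - k)^2*qq c k (c - u x) ->
  is_derive (Wn c k u u1) x (Q_density c k u x).
Proof.
  intros Hc Hk Hk4 D1 D2 Hu Hku E1 E2.
  pose proof (V_deriv c k u u1 u2 x Hc Hk Hk4 D1 D2 Hu Hku E1 E2) as DV.
  set (Vd := (c - u x - k) * (c - k - (c - u x)) / (c - u x)) in DV.
  destruct (log_arg_pos c k u u1 x Hc Hk Hk4 Hu Hku E2) as [L1 L2].
  pose proof (V_sq c k u u1 x Hc Hk Hk4 Hu Hku E2) as HV.
  assert (HVdef : u1 x = - Vf c k u u1 x * (u x - k) / (c - u x)).
  { unfold Vf. field. lra. }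
  set (V := Vf c k u u1) in *.
  assert (Draw : is_derive (Wn c k u u1) x
     (2 * (-(u1 x) + Vd) / (c - u x - k + V x)
      - (c-k)/k * ((Vd * (c - u x) - V x * (- u1 x)) / (c - u x)^2))).
  { unfold Wn. fold V. auto_derive.
    - repeat split; try (eapply ex_of_is; eauto); try lra.
    - rewrite (Derive_eq u x _ (D1 x)), (Derive_eq V x _ DV). field.
      repeat split; lra. }
  assert (T1 : -(u1 x) + Vd = (c - k - (c - u x)) * (V x + (c - u x) - k) / (c - u x)).
  { rewrite HVdef. unfold Vd. field. lra. }
  assert (T2 : Vd * (c - u x) - V x * (- u1 x) = k * (c - k - (c - u x)) * (c - k + (c - u x)) / (c - u x)).
  { rewrite HVdef. unfold Vd.
    transitivity (((c - u x - k) * (c - k - (c - u x)) * (c-u x) - V x ^2 * (u x - k)) / (c - u x)).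
    - field. lra.
    - rewrite HV. unfold qq. field. lra. }
  rewrite T1, T2 in Draw.
  eapply is_derive_ext; [intro t; reflexivity|].
  replace (Q_density c k u x) with
     (2 * ((c - k - (c - u x)) * (V x + (c - u x) - k) / (c - u x)) / (c - u x - k + V x) -
      (c - k) / k * (k * (c - k - (c - u x)) * (c - k + (c - u x)) / (c - u x) / (c - u x) ^ 2)).
  - exact Draw.
  - unfold Q_density. field. repeat split; lra.
Qed.

Lemma qq_cont c k v : continuous (fun t => qq c k (c - t)) v.
Proof.
  apply (ex_derive_continuous (K := R_AbsRing) (V := R_NormedModule)).
  unfold qq. auto_derive. exact I.
Qed.

Lemma V2_large_p c k (u u1 : R -> R) :
  0 < c -> 0 < k -> k < c/4 -> lim_p u k ->
  (forall x, (Vf c k u u1 x)^2 = qq c k (c - u x)) ->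
  exists M, forall x, M < x -> (c-k)*(c-4*k)/2 < (Vf c k u u1 x)^2.
Proof.
  intros Hc Hk Hk4 Hl HV.
  pose proof (lim_p_comp u (fun t => qq c k (c - t)) k Hl (qq_cont c k k)) as L.
  assert (E : qq c k (c - k) = (c-k)*(c-4*k)) by (unfold qq; ring).
  cbv beta in L. rewrite E in L. destruct (L ((c-k)*(c-4*k)/2)) as [M HM]. nra.
  exists M. intros x Hx. rewrite HV. specialize (HM x Hx). apply Rabs_def2 in HM. lra.
Qed.

Lemma V2_large_m c k (u u1 : R -> R) :
  0 < c -> 0 < k -> k < c/4 -> lim_m u k ->
  (forall x, (Vf c k u u1 x)^2 = qq c k (c - u x)) ->
  exists M, forall x, x < M -> (c-k)*(c-4*k)/2 < (Vf c k u u1 x)^2.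
Proof.
  intros Hc Hk Hk4 Hl HV.
  pose proof (lim_m_comp u (fun t => qq c k (c - t)) k Hl (qq_cont c k k)) as L.
  assert (E : qq c k (c - k) = (c-k)*(c-4*k)) by (unfold qq; ring).
  cbv beta in L. rewrite E in L. destruct (L ((c-k)*(c-4*k)/2)) as [M HM]. nra.
  exists M. intros x Hx. rewrite HV. specialize (HM x Hx). apply Rabs_def2 in HM. lra.
Qed.

Lemma u1_of_V c k (u u1 : R -> R) x : u x < c -> k < u x ->
  u1 x = - Vf c k u u1 x * (u x - k) / (c - u x).
Proof. intros H1 H2. unfold Vf. field. lra. Qed.

Lemma V_sign_p c k (u u1 : R -> R) :
  0 < c -> 0 < k -> k < c/4 ->
  (forall x, is_derive u x (u1 x)) -> (forall x, 0 < u x < c) -> (forall x, k < u x) ->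
  continuity (Vf c k u u1) -> lim_p u k ->
  (forall x, (Vf c k u u1 x)^2 = qq c k (c - u x)) ->
  exists M, forall x, M < x -> 0 < Vf c k u u1 x.
Proof.
  intros Hc Hk Hk4 D1 Hu Hku CV Hl HV.
  destruct (V2_large_p c k u u1 Hc Hk Hk4 Hl HV) as [M HM].
  assert (ab : 0 < (c-k)*(c-4*k)/2) by nra.
  assert (NZ : forall x, M < x -> Vf c k u u1 x <> 0).
  { intros x Hx H0. specialize (HM x Hx). rewrite H0 in HM. lra. }
  exists M. intros x1 Hx1.
  destruct (Rlt_or_le 0 (Vf c k u u1 x1)) as [P|P]; [exact P| exfalso].
  assert (Neg : forall x, M < x -> Vf c k u u1 x < 0).
  { intros x Hx. destruct (Rlt_or_le (Vf c k u u1 x) 0) as [h|h]; [exact h| exfalso].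
    destruct (IVT_gen (Vf c k u u1) x1 x 0 CV) as [z [Hz Hz0]].
    { split; [apply Rle_trans with (Vf c k u u1 x1); [apply Rmin_l| exact P]
             | apply Rle_trans with (Vf c k u u1 x); [exact h| apply Rmax_r]]. }
    apply (NZ z); [|exact Hz0].
    destruct Hz as [Hz _]. eapply Rlt_le_trans; [|exact Hz].
    apply Rmin_glb_lt; assumption. }
  assert (Pos1 : forall x, M < x -> 0 < u1 x).
  { intros x Hx. rewrite (u1_of_V c k u u1 x (proj2 (Hu x)) (Hku x)).
    specialize (Neg x Hx). pose proof (Hku x). pose proof (Hu x).
    apply Rdiv_lt_0_compat; [|lra]. nra. }
  assert (I1 : u x1 < u (x1 + 1)).
  { apply (sincr_of_deriv u u1); [lra| exact D1| intros; apply Pos1; lra]. }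
  destruct (Hl (u (x1+1) - k)) as [M' HM']. pose proof (Hku x1). lra.
  set (x := Rmax M' (x1 + 1) + 1).
  assert (Hx : M' < x /\ x1 + 1 < x).
  { unfold x; split; [pose proof (Rmax_l M' (x1+1))| pose proof (Rmax_r M' (x1+1))]; lra. }
  assert (I2 : u (x1 + 1) < u x).
  { apply (sincr_of_deriv u u1); [lra| exact D1| intros; apply Pos1; lra]. }
  specialize (HM' x (proj1 Hx)). apply Rabs_def2 in HM'. lra.
Qed.

Lemma V_sign_m c k (u u1 : R -> R) :
  0 < c -> 0 < k -> k < c/4 ->
  (forall x, is_derive u x (u1 x)) -> (forall x, 0 < u x < c) -> (forall x, k < u x) ->
  continuity (Vf c k u u1) -> lim_m u k ->
  (forall x, (Vf c k u u1 x)^2 = qq c k (c - u x)) ->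
  exists M, forall x, x < M -> Vf c k u u1 x < 0.
Proof.
  intros Hc Hk Hk4 D1 Hu Hku CV Hl HV.
  destruct (V2_large_m c k u u1 Hc Hk Hk4 Hl HV) as [M HM].
  assert (ab : 0 < (c-k)*(c-4*k)/2) by nra.
  assert (NZ : forall x, x < M -> Vf c k u u1 x <> 0).
  { intros x Hx H0. specialize (HM x Hx). rewrite H0 in HM. lra. }
  exists M. intros x1 Hx1.
  destruct (Rlt_or_le (Vf c k u u1 x1) 0) as [P|P]; [exact P| exfalso].
  assert (Pos : forall x, x < M -> 0 < Vf c k u u1 x).
  { intros x Hx. destruct (Rlt_or_le 0 (Vf c k u u1 x)) as [h|h]; [exact h| exfalso].
    destruct (IVT_gen (Vf c k u u1) x1 x 0 CV) as [z [Hz Hz0]].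
    { split; [apply Rle_trans with (Vf c k u u1 x); [apply Rmin_r| exact h]
             | apply Rle_trans with (Vf c k u u1 x1); [exact P| apply Rmax_l]]. }
    apply (NZ z); [|exact Hz0].
    destruct Hz as [_ Hz]. eapply Rle_lt_trans; [exact Hz|].
    apply Rmax_lub_lt; assumption. }
  assert (Neg1 : forall x, x < M -> u1 x < 0).
  { intros x Hx. rewrite (u1_of_V c k u u1 x (proj2 (Hu x)) (Hku x)).
    specialize (Pos x Hx). pose proof (Hku x). pose proof (Hu x).
    assert (0 < Vf c k u u1 x * (u x - k) / (c - u x)).
    { apply Rdiv_lt_0_compat; [|lra]. nra. }
    replace (- Vf c k u u1 x * (u x - k) / (c - u x)) with (- (Vf c k u u1 x * (u x - k) / (c - u x))) by (field; lra).
    lra. }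
  set (mu := fun x => - u x).
  assert (Dmu : forall x, is_derive mu x (- u1 x)).
  { intro x. unfold mu. apply (is_derive_opp u). apply D1. }
  assert (I1 : mu (x1 - 1) < mu x1).
  { apply (sincr_of_deriv mu (fun x => - u1 x)); [lra| exact Dmu| intros; specialize (Neg1 x); lra]. }
  unfold mu in I1.
  destruct (Hl (u (x1-1) - k)) as [M' HM']. pose proof (Hku x1). lra.
  set (x := Rmin M' (x1 - 1) - 1).
  assert (Hx : x < M' /\ x < x1 - 1).
  { unfold x; split; [pose proof (Rmin_l M' (x1-1))| pose proof (Rmin_r M' (x1-1))]; lra. }
  assert (I2 : mu x < mu (x1 - 1)).
  { apply (sincr_of_deriv mu (fun x => - u1 x)); [lra| exact Dmu| intros; specialize (Neg1 x0); lra]. }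
  unfold mu in I2.
  specialize (HM' x (proj1 Hx)). apply Rabs_def2 in HM'. lra.
Qed.

Definition SS c k := sqrt ((c-k)*(c-4*k)).
Definition Qf c k := 2*ln(c-2*k+SS c k) - 2*ln(c-2*k-SS c k) - 2*SS c k/k.

Definition Gp c k v := 2 * ln (c - v - k + sqrt (qq c k (c - v))) - (c-k)/k * sqrt (qq c k (c - v)) / (c - v).
Definition Gm c k v := 2 * ln (c - v - k - sqrt (qq c k (c - v))) + (c-k)/k * sqrt (qq c k (c - v)) / (c - v).

Lemma SS_facts c k : 0 < c -> 0 < k -> k < c/4 ->
  0 < SS c k /\ SS c k * SS c k = (c-k)*(c-4*k) /\ SS c k < c - 2*k.
Proof.
  intros Hc Hk Hk4. unfold SS.
  assert (0 < (c-k)*(c-4*k)) by nra.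
  pose proof (sqrt_lt_R0 _ H). pose proof (sqrt_sqrt _ (Rlt_le _ _ H)).
  repeat split; try lra. nra.
Qed.

Lemma qq_k c k : qq c k (c - k) = (c-k)*(c-4*k).
Proof. unfold qq. ring. Qed.

Lemma Gp_cont c k : 0 < c -> 0 < k -> k < c/4 -> continuous (Gp c k) k.
Proof.
  intros Hc Hk Hk4. destruct (SS_facts c k Hc Hk Hk4) as [S1 [S2 S3]].
  apply (ex_derive_continuous (K := R_AbsRing) (V := R_NormedModule)).
  unfold Gp, qq. auto_derive.
  replace ((c + - k) * ((c + - k) * 1) + - (2 * k * (c + - k)) + - (k * (c - k))) with ((c-k)*(c-4*k)) by ring.
  fold (SS c k). repeat split; try lra; nra.
Qed.

Lemma Gm_cont c k : 0 < c -> 0 < k -> k < c/4 -> continuous (Gm c k) k.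
Proof.
  intros Hc Hk Hk4. destruct (SS_facts c k Hc Hk Hk4) as [S1 [S2 S3]].
  apply (ex_derive_continuous (K := R_AbsRing) (V := R_NormedModule)).
  unfold Gm, qq. auto_derive.
  replace ((c + - k) * ((c + - k) * 1) + - (2 * k * (c + - k)) + - (k * (c - k))) with ((c-k)*(c-4*k)) by ring.
  fold (SS c k). repeat split; try lra; nra.
Qed.

Lemma Gp_k c k : 0 < c -> 0 < k -> k < c/4 -> Gp c k k = 2*ln(c-2*k+SS c k) - SS c k/k.
Proof.
  intros Hc Hk Hk4. unfold Gp. rewrite qq_k. fold (SS c k).
  replace (c - k - k) with (c - 2*k) by ring. field. lra.
Qed.

Lemma Gm_k c k : 0 < c -> 0 < k -> k < c/4 -> Gm c k k = 2*ln(c-2*k-SS c k) + SS c k/k.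
Proof.
  intros Hc Hk Hk4. unfold Gm. rewrite qq_k. fold (SS c k).
  replace (c - k - k) with (c - 2*k) by ring. field. lra.
Qed.

Lemma fp_all (P : R*R -> Prop) : (forall a b, P (a,b)) ->
  filter_prod (Rbar_locally m_infty) (Rbar_locally p_infty) P.
Proof.
  intro H. apply Filter_prod with (fun _ => True) (fun _ => True).
  - apply filter_true.
  - apply filter_true.
  - intros; apply H.
Qed.

Lemma profile_integral c k phi : 0 < c -> 0 < k -> k < c/4 ->
  DP_solitary_profile c k phi ->
  is_RInt_gen (Q_density c k phi) (Rbar_locally m_infty) (Rbar_locally p_infty) (Qf c k).
Proof.
  intros Hc Hk Hk4 [Hsm [Hode [H10 [Hlp [Hlm [Hbd Hnc]]]]]].
  set (u1 := Derive_n phi 1). set (u2 := Derive_n phi 2). set (u3 := Derive_n phi 3).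
  assert (D1 : forall x, is_derive phi x (u1 x)).
  { intro x. exact (Derive_correct (Derive_n phi 0) x (Hsm 1%nat x)). }
  assert (D2 : forall x, is_derive u1 x (u2 x)).
  { intro x. exact (Derive_correct (Derive_n phi 1) x (Hsm 2%nat x)). }
  assert (D3 : forall x, is_derive u2 x (u3 x)).
  { intro x. exact (Derive_correct (Derive_n phi 2) x (Hsm 3%nat x)). }
  pose proof (is_lim_to_p phi k Hlp) as Lp.
  pose proof (is_lim_to_m phi k Hlm) as Lm.
  assert (Hlt : forall x, phi x < c) by (intro x; apply Hbd).
  pose proof (integrals c k phi u1 u2 u3 Hc Hk ltac:(lra) D1 D2 D3 Hode Lp Hlt) as INT.
  assert (E1 : forall x, (c - phi x)*u2 x = u1 x^2 + (phi x - k)*(c - 2*phi x - 2*k))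
    by (intro x; apply INT).
  assert (E2 : forall x, (c-phi x)^2*u1 x^2 = (phi x - k)^2*qq c k (c - phi x))
    by (intro x; apply INT).
  pose proof (never_k c k phi u1 Hc Hk Hk4 D1 Hbd E2 Hnc) as NK.
  pose proof (above_k c k phi u1 Hc Hk Hk4 D1 Hbd E2 H10 NK) as AK.
  assert (DV : forall x, is_derive (Vf c k phi u1) x ((c - phi x - k) * (c - k - (c - phi x)) / (c - phi x))).
  { intro x. apply (V_deriv c k phi u1 u2 x Hc Hk Hk4 D1 D2 (Hbd x) (AK x) (E1 x) (E2 x)). }
  assert (CV : continuity (Vf c k phi u1)).
  { intro x. eapply deriv_cont_pt. apply DV. }
  assert (HV : forall x, (Vf c k phi u1 x)^2 = qq c k (c - phi x)).
  { intro x. apply (V_sq c k phi u1 x Hc Hk Hk4 (Hbd x) (AK x) (E2 x)). }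
  destruct (V_sign_p c k phi u1 Hc Hk Hk4 D1 Hbd AK CV Lp HV) as [Mp HMp].
  destruct (V_sign_m c k phi u1 Hc Hk Hk4 D1 Hbd AK CV Lm HV) as [Mm HMm].
  assert (WLp : lim_p (Wn c k phi u1) (Gp c k k)).
  { eapply lim_p_ext; [| apply (lim_p_comp phi (Gp c k) k Lp (Gp_cont c k Hc Hk Hk4))].
    exists Mp. intros x Hx. specialize (HMp x Hx).
    assert (HS : sqrt (qq c k (c - phi x)) = Vf c k phi u1 x).
    { rewrite <- HV. apply sqrt_pow2. lra. }
    unfold Gp, Wn. rewrite HS. reflexivity. }
  assert (WLm : lim_m (Wn c k phi u1) (Gm c k k)).
  { eapply lim_m_ext; [| apply (lim_m_comp phi (Gm c k) k Lm (Gm_cont c k Hc Hk Hk4))].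
    exists Mm. intros x Hx. specialize (HMm x Hx).
    assert (HS : sqrt (qq c k (c - phi x)) = - Vf c k phi u1 x).
    { rewrite <- HV. replace (Vf c k phi u1 x ^ 2) with ((- Vf c k phi u1 x)^2) by ring.
      apply sqrt_pow2. lra. }
    unfold Gm, Wn. rewrite HS.
    replace (c - phi x - k - - Vf c k phi u1 x) with (c - phi x - k + Vf c k phi u1 x) by ring.
    pose proof (Hlt x). field. lra. }
  assert (DW : forall x, is_derive (Wn c k phi u1) x (Q_density c k phi x)).
  { intro x. apply (W_deriv c k phi u1 u2 x Hc Hk Hk4 D1 D2 (Hbd x) (AK x) (E1 x) (E2 x)). }
  assert (CQ : forall x, continuous (Q_density c k phi) x).
  { intro x. apply (ex_derive_continuous (K := R_AbsRing) (V := R_NormedModule)).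
    unfold Q_density. auto_derive.
    repeat split; try (eapply ex_of_is; eauto); intro HH; pose proof (Hlt x); lra. }
  pose proof (is_RInt_gen_Derive (Fa := Rbar_locally m_infty) (Fb := Rbar_locally p_infty)
     (Wn c k phi u1) (Gm c k k) (Gp c k k)) as IG.
  assert (EQ : Gp c k k - Gm c k k = Qf c k).
  { rewrite Gp_k, Gm_k by assumption. unfold Qf. unfold Rdiv. lra. }
  rewrite EQ in IG.
  eapply is_RInt_gen_ext; [| apply IG].
  - apply fp_all. intros a b x _. apply is_derive_unique. apply DW.
  - apply fp_all. intros a b x _. eapply ex_of_is. apply DW.
  - apply fp_all. intros a b x _.
    apply (continuous_ext (Q_density c k phi)).
    + intro t. symmetry. apply is_derive_unique. apply DW.
    + apply CQ.
  - apply m_to_filterlim. exact WLm.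
  - apply p_to_filterlim. exact WLp.
Qed.

Definition Qd c k := (2*c+k)*(c-4*k)/(k^2 * SS c k).

Lemma inv_prod a b p : a * b = p -> p <> 0 -> / a = b / p.
Proof.
  intros H Hp. assert (a <> 0) by (intro; subst; apply Hp; ring).
  assert (b <> 0) by (intro; subst; apply Hp; ring).
  rewrite <- H. field. split; assumption.
Qed.

Lemma Qf_deriv c k : 0 < c -> 0 < k -> k < c/4 -> is_derive (Qf c) k (Qd c k).
Proof.
  intros Hc Hk Hk4. destruct (SS_facts c k Hc Hk Hk4) as [S1 [S2 S3]].
  unfold Qf, SS. auto_derive.
  - change (sqrt ((c + - k) * (c + - (4 * k)))) with (SS c k).
    repeat split; try lra; nra.
  - change (sqrt ((c + - k) * (c + - (4 * k)))) with (SS c k).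
    unfold Qd. set (S := SS c k) in *.
    assert (kc : 0 < k * c) by nra.
    rewrite (inv_prod (c + - (2 * k) + S) (c - 2*k - S) (k*c)) by (nra || lra).
    rewrite (inv_prod (c + - (2 * k) + - S) (c - 2*k + S) (k*c)) by (nra || lra).
    field_simplify_eq; [| lra].
    replace (S^2) with ((c-k)*(c-4*k)) by (rewrite <- S2; ring). ring.
Qed.

Lemma Qf_incr c k1 k2 : 0 < c -> 0 < k1 -> k1 < k2 -> k2 < c/4 -> Qf c k1 < Qf c k2.
Proof.
  intros Hc Hk1 H12 Hk2.
  destruct (MVT_gen (Qf c) k1 k2 (Qd c)) as [z [Hz E]].
  - intros x Hx. rewrite Rmin_left, Rmax_right in Hx by lra. apply Qf_deriv; lra.
  - intros x Hx. rewrite Rmin_left, Rmax_right in Hx by lra.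
    eapply deriv_cont_pt. apply Qf_deriv; lra.
  - rewrite Rmin_left, Rmax_right in Hz by lra.
    assert (0 < Qd c z).
    { destruct (SS_facts c z Hc ltac:(lra) ltac:(lra)) as [S1 _].
      unfold Qd. apply Rdiv_lt_0_compat.
      - apply Rmult_lt_0_compat; lra.
      - apply Rmult_lt_0_compat; [apply pow_lt; lra| exact S1]. }
    assert (0 < Qd c z * (k2 - k1)) by (apply Rmult_lt_0_compat; lra). lra.
Qed.

Theorem lemma5p2 (c k1 k2 : R) (phi1 phi2 : R -> R) :
  0 < c ->
  0 < k1 -> k1 < k2 -> k2 < c / 4 ->
  DP_solitary_profile c k1 phi1 ->
  DP_solitary_profile c k2 phi2 ->
  Q_int c k1 phi1 /\ Q_int c k2 phi2 /\ Q c k1 phi1 < Q c k2 phi2.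
Proof.
  intros Hc Hk1 H12 Hk2 P1 P2.
  pose proof (profile_integral c k1 phi1 Hc Hk1 ltac:(lra) P1) as I1.
  pose proof (profile_integral c k2 phi2 Hc ltac:(lra) Hk2 P2) as I2.
  split; [exists (Qf c k1); exact I1|].
  split; [exists (Qf c k2); exact I2|].
  unfold Q. rewrite (is_RInt_gen_unique _ _ I1), (is_RInt_gen_unique _ _ I2).
  apply Qf_incr; assumption.
Qed.
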